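(* Let $k\in\mathbb{N}$ and let $G$ be a graph that has a $T_0$-partition of width at most $k$ for some tree $T_0$. Then $G$ has a $T$-partition of width at most $k$ for some tree $T$ with $\Delta(T)\leq \max\{k\Delta(G),2\}$.
   Context: All graphs are finite and simple. $\Delta(G)$ denotes the maximum degree of $G$. For a graph $G$ and a tree $T$, a $T$-partition of $G$ is a family $(V_x : x\in V(T))$ of pairwise disjoint subsets of $V(G)$ (some possibly empty) with union $V(G)$, indexed by the nodes of $T$, such that for every edge $vw$ of $G$, if $v\in V_x$ and $w\in V_y$ then $x=y$ or $xy\in E(T)$. The width of a $T$-partition is $\max\{|V_x| : x\in V(T)\}$. *)

(* Defs.v *)
From mathcomp Require Import all_boot.
Set Implicit Arguments. Unset Strict Implicit. Unset Printing Implicit Defensive.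

Definition simple_graph (V : finType) (e : rel V) : Prop :=
  symmetric e /\ irreflexive e.

Definition nbhd (V : finType) (e : rel V) (x : V) : {set V} := [set y | e x y].
Definition deg (V : finType) (e : rel V) (x : V) : nat := #|nbhd e x|.
Definition max_deg (V : finType) (e : rel V) : nat := \max_(x : V) deg e x.

Definition connected_graph (V : finType) (e : rel V) : Prop :=
  forall x y : V, connect e x y.

Definition acyclic (V : finType) (e : rel V) : Prop :=
  forall s : seq V, uniq s -> 3 <= size s -> ~~ cycle e s.

Definition is_tree (T : finType) (e : rel T) : Prop :=
  0 < #|T| /\ simple_graph e /\ connected_graph e /\ acyclic e.

Definition T_partition (V : finType) (eG : rel V) (T : finType) (eT : rel T)
    (P : T -> {set V}) : Prop :=
  (forall x y : T, x != y -> [disjoint P x & P y]) /\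
  (\bigcup_(x : T) P x = [set: V]) /\
  (forall (v w : V) (x y : T), eG v w -> v \in P x -> w \in P y ->
      x = y \/ eT x y).

Definition width (V : finType) (T : finType) (P : T -> {set V}) : nat :=
  \max_(x : T) #|P x|.

(* Main.v *)
Require Import Defs.
From mathcomp Require Import all_boot.
From mathcomp Require Import zify.
Set Implicit Arguments. Unset Strict Implicit. Unset Printing Implicit Defensive.

Lemma cardU_le (T : finType) (A B : {set T}) : #|A :|: B| <= #|A| + #|B|.
Proof. by rewrite -cardsUI leq_addr. Qed.

Definition addE (T : finType) (E : rel T) (x z : T) : rel T :=
  [rel u v | E u v || ((u == x) && (v == z)) || ((u == z) && (v == x))].
Arguments addE T E x z _ _ /.

Definition outF (T : finType) (F : rel T) (S : {set T}) (y : T) := #|nbhd F y :\: S|.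

Lemma outF_add (T : finType) (F : rel T) (S : {set T}) x y :
  x \notin S -> outF F S y = F y x + outF F (x |: S) y.
Proof.
move=> xS; rewrite /outF (cardsD1 x); congr (_ + _).
  by rewrite !inE xS.
apply: eq_card => v; rewrite !inE.
by case: (v =P x) => //= ->; rewrite (negbTE xS).
Qed.

Lemma outF_le (T : finType) (F : rel T) (S : {set T}) y : outF F S y <= deg F y.
Proof. by apply: subset_leq_card; apply: subsetDl. Qed.

Lemma card_cond (T : finType) (b : bool) (c : T) : #|[set v | b && (v == c)]| <= b.
Proof.
case: b.
  by rewrite (_ : [set v | true && (v == c)] = [set c]) ?cards1 //; apply/setP => v; rewrite !inE.
by rewrite (_ : [set v | false && (v == c)] = set0) ?cards0 //; apply/setP => v; rewrite !inE.
Qed.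

Lemma deg_add (T : finType) (E : rel T) x z w :
  deg (addE E x z) w <= deg E w + (w == x) + (w == z).
Proof.
rewrite /deg.
have -> : nbhd (addE E x z) w =
   nbhd E w :|: [set v | (w == x) && (v == z)] :|: [set v | (w == z) && (v == x)].
  by apply/setP => v; rewrite !inE.
apply: leq_trans (cardU_le _ _) _; apply: leq_add; last exact: card_cond.
apply: leq_trans (cardU_le _ _) _; apply: leq_add => //; exact: card_cond.
Qed.

Lemma deg_out (T : finType) (E : rel T) (S : {set T}) x :
  (forall u v, E u v -> (u \in S) && (v \in S)) -> x \notin S -> deg E x = 0.
Proof.
move=> Ein xS; apply/eqP; rewrite cards_eq0; apply/eqP/setP => v; rewrite !inE.
by apply/negP => /Ein /andP [xS' _]; rewrite xS' in xS.
Qed.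

Lemma cnt_add (T : finType) (F E : rel T) (S : {set T}) x z w :
  x \notin S -> w \in S ->
  deg (addE E x z) w + outF F (x |: S) w + F w x <= deg E w + outF F S w + (w == z).
Proof.
move=> xS wS.
have wx : (w == x) = false by apply/negP => /eqP ewx; rewrite -ewx wS in xS.
rewrite (outF_add F w xS).
have := deg_add E x z w; rewrite wx addn0 => H.
lia.
Qed.

Lemma deg_new (T : finType) (E : rel T) (S : {set T}) x z :
  (forall u v, E u v -> (u \in S) && (v \in S)) -> x \notin S -> z \in S ->
  deg (addE E x z) x <= 1.
Proof.
move=> Ein xS zS.
have xz : (x == z) = false by apply/negP => /eqP exz; rewrite exz zS in xS.
by have := deg_add E x z x; rewrite (deg_out Ein xS) eqxx xz.
Qed.
Definition treeOn (T : finType) (S : {set T}) (E : rel T) : Prop :=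
  [/\ (forall u v, E u v -> (u \in S) && (v \in S)), symmetric E, irreflexive E,
      (forall u v, u \in S -> v \in S -> connect E u v) & acyclic E].

Lemma treeOn_add (T : finType) (S : {set T}) (E : rel T) x z :
  treeOn S E -> x \notin S -> z \in S -> treeOn (x |: S) (addE E x z).
Proof.
move=> [Ein Es Ei Ec Ea] xS zS.
have xz : x != z by apply/eqP => exz; move: xS; rewrite exz zS.
have Ex : forall w, E x w = false.
  by move=> w; apply/negP => /Ein /andP [xS']; rewrite xS' in xS.
have Ex' : forall w, E w x = false by move=> w; rewrite Es Ex.
have sub : forall a b, connect E a b -> connect (addE E x z) a b.
  by move=> a b; apply: connect_sub => c d Ecd; apply: connect1; rewrite /= Ecd.
split.
- move=> u v /= /orP [/orP [/Ein /andP [uS vS]|/andP [/eqP -> /eqP ->]]|/andP [/eqP -> /eqP ->]];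
    by rewrite !inE ?uS ?vS ?zS ?eqxx ?orbT.
- move=> u v /=; rewrite Es.
  by case: (E v u); case: (u =P x); case: (u =P z); case: (v =P x); case: (v =P z).
- move=> u /=; rewrite Ei /=; case: (u =P x) => [->|_].
    by rewrite (negbTE xz).
  by rewrite andbF.
- have xz' : connect (addE E x z) x z by apply: connect1; rewrite /= !eqxx orbT.
  have zx' : connect (addE E x z) z x by apply: connect1; rewrite /= !eqxx !orbT.
  move=> u v; rewrite !inE => /predU1P [->|uS] /predU1P [->|vS] //.
  + exact: connect_trans xz' (sub _ _ (Ec _ _ zS vS)).
  + exact: connect_trans (sub _ _ (Ec _ _ uS zS)) zx'.
  + exact: sub _ _ (Ec _ _ uS vS).
- move=> s uq sz; apply/negP => cy.
  case: (boolP (x \in s)) => [xs|xs].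
    case/splitPr: xs uq sz cy => s1 s2.
    rewrite -(rot_uniq (size s1)) -(rot_cycle (size s1)) rot_size_cat => uq sz.
    have : 3 <= size (x :: s2 ++ s1) by move: sz; rewrite /= !size_cat /= addnS addnC.
    move: uq {sz}; rewrite cat_cons; move: (s2 ++ s1) => s3.
    case: s3 => [|a [|b r]] //= uq _.
    rewrite Ex /= eqxx (negbTE xz) /= orbF => /andP [/eqP az].
    rewrite rcons_path => /andP [_] /andP [_] /=.
    rewrite Ex' eqxx (negbTE xz) andbF andbT /= => /eqP lz.
    move: uq => /and3P [_ /negP an _]; apply: an.
    by rewrite az -lz mem_last.
  have : cycle E s.
    apply: (sub_in_cycle (P := mem s)) cy; last by apply/allP.
    move=> a b ain bin /= /orP [/orP [->//|/andP [/eqP ea _]]|/andP [_ /eqP eb]].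
      by move: xs; rewrite -ea ain.
    by move: xs; rewrite -eb bin.
  by rewrite (negbTE (Ea _ uq sz)).
Qed.
Definition restr (T : finType) (S : {set T}) (F : rel T) : rel T :=
  [rel u v | [&& u \in S, v \in S & F u v]].
Arguments restr T S F _ _ /.

Lemma path_restr_all (T : finType) (S : {set T}) (F : rel T) a p :
  path (restr S F) a p -> all (mem S) p.
Proof.
elim: p a => [|b p IH] a //= /andP [/and3P [_ bS _] pth].
by rewrite bS (IH b).
Qed.

Lemma cycA (T : finType) (F : rel T) (S : {set T}) x y1 y2 :
  symmetric F -> acyclic F -> x \notin S -> y1 != y2 -> F x y1 -> F x y2 ->
  connect (restr S F) y1 y2 -> False.
Proof.
move=> Fs Fa xS ne Fx1 Fx2 /connectP [p pth E2].
move: ne Fx2; rewrite E2 => {E2}.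
case/shortenP: pth => p' pth' uq _.
case: p' pth' uq => [|z q] pth' uq; first by rewrite eqxx.
move=> _ Fx2.
have y1S : y1 \in S by case/andP: pth' => /and3P [].
have allS := path_restr_all pth'.
have Hu : uniq [:: x, y1, z & q].
  rewrite /= in uq *; rewrite uq andbT.
  rewrite !inE negb_or; apply/andP; split.
    by apply/eqP => exy; move: xS; rewrite exy y1S.
  apply/negP => xzq; move/allP: allS => /(_ x xzq) /=; by rewrite (negbTE xS).
suff Hc : cycle F [:: x, y1, z & q] by move: (Fa _ Hu isT); rewrite Hc.
rewrite /= Fx1 /=.
have pthF : path F y1 (z :: q).
  by apply: sub_path pth' => a b /and3P [].
move: pthF => /= /andP [-> pq] /=.
rewrite rcons_path pq /= Fs; exact: Fx2.
Qed.
Lemma suffix_short (T : finType) (F : rel T) a w b :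
  acyclic F -> sorted F (a ++ w :: b) -> uniq (a ++ w :: b) ->
  F (last w b) w -> size b <= 1.
Proof.
move=> Fa so uq Fl; rewrite leqNgt; apply/negP => sz.
have Hu : uniq (w :: b) by move: uq; rewrite cat_uniq => /and3P [].
have Hc : cycle F (w :: b).
  rewrite /= rcons_path Fl andbT.
  by case: (cat_sorted2 so).
by move: (Fa _ Hu sz); rewrite Hc.
Qed.

Lemma leafL (T : finType) (F : rel T) :
  symmetric F -> irreflexive F -> acyclic F -> forall t,
  exists u, [/\ connect F t u, #|nbhd F u| <= 1 & (u = t -> #|nbhd F u| = 0)].
Proof.
move=> Fs Fi Fa t.
pose P n := [exists p : n.-tuple T, path F t p && uniq (t :: p)].
have exP : exists n, P n by exists 0; apply/existsP; exists [tuple].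
have ubP : forall n, P n -> n <= #|T|.
  move=> n /existsP [p /andP [_ uq]].
  have := max_card (mem (t :: p)); rewrite (card_uniqP uq) /= size_tuple.
  exact: ltnW.
case: (ex_maxnP exP ubP) => n /existsP [p /andP [pth uq]] mx.
set u := last t p.
have nb : forall w, F u w -> w \in t :: (p : seq T).
  move=> w Fuw; apply/negPn/negP => wn.
  have : P n.+1.
    apply/existsP; exists (rcons_tuple p w).
    apply/andP; split; first by rewrite /= rcons_path pth Fuw.
    have -> : t :: rcons_tuple p w = rcons (t :: tval p) w by []. 
    by rewrite rcons_uniq wn uq.
  by move/mx; rewrite ltnn.
have shape : forall w, F u w -> exists a, t :: (p : seq T) = a ++ [:: w; u].
  move=> w Fuw; have := nb w Fuw.
  move Es: (t :: tval p) => s ws; case/splitPr: ws Es => a b E.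
  have Eu : u = last w b.
    by rewrite /u -[last t p]/(last t (t :: (p:seq T))) E last_cat.
  have sb : size b <= 1.
    apply: (@suffix_short T F a w b Fa).
    - by rewrite -E.
    - by rewrite -E.
    - by rewrite -Eu.
  case: b E Eu sb => [|c [|]] // E Eu _.
    by move: Fuw; rewrite Eu /= Fi.
  by exists a; rewrite Eu.
exists u; split.
- by apply/connectP; exists (tval p).
- apply/card_le1P => w1; rewrite inE => F1 w2; rewrite inE.
  apply/idP/eqP => [F2|->//].
  have [a1 E1] := shape _ F1; have [a2 E2] := shape _ F2.
  have := congr1 rev (etrans (esym E1) E2).
  by rewrite !rev_cat /= => -[].
- move=> ut.
  have p0 : tval p = [::].
    move: uq ut; rewrite /u; case: (tval p) => [//|y q] /= /andP [tn _] ut.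
    by rewrite -ut (mem_last y q) in tn.
  apply/eqP; rewrite cards_eq0; apply/eqP/setP => w; rewrite !inE.
  apply/negbTE/negP => Fuw; move: (nb w Fuw); rewrite p0 inE => /eqP ewt.
  by move: Fuw; rewrite ewt -ut Fi.
Qed.
Lemma grow (T : finType) (F : rel T) (M : nat) :
  symmetric F -> irreflexive F -> acyclic F -> 2 <= M -> (forall y, deg F y <= M) ->
  forall n (S : {set T}) (E : rel T), #|~: S| = n -> treeOn S E ->
  (forall u v, u \in S -> v \in S -> F u v -> E u v) ->
  (forall y, y \in S -> deg E y + outF F S y <= M) ->
  (exists h, (h \in S /\ deg E h + outF F S h <= 1) \/
             [/\ h \notin S, deg F h <= 1 & exists2 s, s \in S & connect F s h]) ->
  (forall u v, u \in S -> v \in S -> connect F u v -> connect (restr S F) u v) ->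
  exists E', [/\ treeOn setT E', (forall u v, F u v -> E' u v) & forall y, deg E' y <= M].
Proof.
move=> Fs Fi Fa M2 FM; elim=> [|n IH] S E cS tS I1 I2 I3 I4.
- have ST : S = setT.
    apply/setP => v; rewrite inE; apply/negPn/negP => vS.
    have : v \in ~: S by rewrite inE.
    by rewrite (cards0_eq cS) inE.
  subst S; exists E; split => //.
  + by move=> u v; apply: I1; rewrite inE.
  + by move=> y; apply: leq_trans (I2 y (in_setT y)); apply: leq_addr.
have card' : forall x, x \notin S -> #|~: (x |: S)| = n.
  move=> x xS; move: cS; rewrite (cardsD1 x (~: S)) in_setC xS add1n => -[<-].
  by apply: eq_card => v; rewrite !inE negb_or andbC.
have sub_restr : forall x a b, connect (restr S F) a b -> connect (restr (x |: S) F) a b.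
  move=> x a b; apply: connect_sub => c d /and3P [cS' dS Fcd]; apply: connect1.
  by rewrite /= !inE cS' dS Fcd !orbT.
have [Ein Es Ei Ec Ea] := tS.
case: (boolP [exists x, exists y, [&& x \notin S, y \in S & F x y]]).
- case/existsP => x /existsP [y /and3P [xS yS Fxy]].
  have Fyx : F y x by rewrite Fs.
  have uniqF : forall v, v \in S -> F x v -> v = y.
    move=> v vS Fxv; apply/eqP; apply/negPn/negP => nev.
    have cyv : connect F y v := connect_trans (connect1 Fyx) (connect1 Fxv).
    apply: (cycA Fs Fa xS _ Fxy Fxv (I4 _ _ yS vS cyv)).
    by rewrite eq_sym.
  have o1 : outF F S x < deg F x.
    rewrite /outF /deg (cardsD1 y (nbhd F x)) inE Fxy add1n ltnS.
    apply: subset_leq_card; apply/subsetP => v; rewrite !inE => /andP [vS' Fxv].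
    rewrite Fxv andbT; apply/eqP => evy; by rewrite evy yS in vS'.
  have cntx : deg (addE E x y) x + outF F (x |: S) x <= deg F x.
    have := deg_new Ein xS yS; have := outF_add F x xS; rewrite Fi add0n.
    lia.
  have cntle : forall w, w \in S ->
      deg (addE E x y) w + outF F (x |: S) w <= deg E w + outF F S w.
    move=> w wS; have := cnt_add F E y xS wS.
    case: (w =P y) => [->|_]; rewrite ?Fyx /=; lia.
  apply: (IH (x |: S) (addE E x y)).
  + exact: card' x xS.
  + exact: treeOn_add tS xS yS.
  + move=> u v; rewrite !inE => /predU1P [->|uS] /predU1P [->|vS] Fuv.
    * by rewrite Fi in Fuv.
    * by rewrite (uniqF v vS Fuv) /= !eqxx orbT.
    * by rewrite (uniqF u uS (_ : F x u)) /= ?eqxx ?orbT // Fs.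
    * by rewrite /= (I1 u v uS vS Fuv).
  + move=> w; rewrite !inE => /predU1P [->|wS].
    * exact: leq_trans cntx (FM x).
    * exact: leq_trans (cntle w wS) (I2 w wS).
  + case: I3 => h [[hS hc]|[hS hF [s sS cs]]].
    * exists h; left; split; first by rewrite !inE hS orbT.
      exact: leq_trans (cntle h hS) hc.
    * case: (h =P x) => [ehx|nhx].
        exists x; left; split; first by rewrite setU11.
        by apply: leq_trans cntx _; rewrite -ehx.
      exists h; right; split => //.
        by rewrite !inE negb_or hS andbT; apply/eqP.
      by exists s => //; rewrite !inE sS orbT.
  + have exy : restr (x |: S) F x y by rewrite /= !inE eqxx yS Fxy !orbT.
    have eyx : restr (x |: S) F y x by rewrite /= !inE eqxx yS Fyx !orbT.
    move=> u v; rewrite !inE => /predU1P [->|uS] /predU1P [->|vS] cuv.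
    * exact: connect0.
    * apply: connect_trans (connect1 exy) _; apply: sub_restr; apply: I4 => //.
      exact: connect_trans (connect1 Fyx) cuv.
    * apply: connect_trans _ (connect1 eyx); apply: sub_restr; apply: I4 => //.
      exact: connect_trans cuv (connect1 Fxy).
    * exact: sub_restr (I4 _ _ uS vS cuv).
- move=> ncross.
  have cl : closed F (mem S).
    move=> a b Fab; apply/idP/idP => [aS|bS]; apply/negPn/negP => nS;
      move/negP: ncross; apply; apply/existsP.
      by exists b; apply/existsP; exists a; rewrite nS aS Fs.
    by exists a; apply/existsP; exists b; rewrite nS bS.
  have : ~: S != set0 by rewrite -card_gt0 cS.
  case/set0Pn => t; rewrite inE => tS'.
  have [u [ctu du _]] := leafL Fs Fi Fa t.
  have uS : u \notin S by move: (closed_connect cl ctu); rewrite (negbTE tS') => <-.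
  have [h hS hc] : exists2 h, h \in S & deg E h + outF F S h <= 1.
    case: I3 => h [[hS hc]|[hS _ [s sS cs]]]; first by exists h.
    by move: (closed_connect cl cs); rewrite sS (negbTE hS).
  have [v [cuv dv vu]] := leafL Fs Fi Fa u.
  have clS : forall a b, a \in S -> connect F a b -> b \in S.
    by move=> a b aS cab; move: (closed_connect cl cab); rewrite aS => <-.
  have Fu : forall b, b \in S -> F u b = false.
    move=> b bS; apply/negP => Fub; move/negP: uS; apply; apply: (clS b) => //.
    by apply: connect1; rewrite Fs.
  have cntu : deg (addE E u h) u + outF F (u |: S) u <= 2.
    have := deg_new Ein uS hS; have := outF_le F (u |: S) u; rewrite /deg in du *.
    rewrite /deg; lia.
  have cntle : forall w, w \in S ->
      deg (addE E u h) w + outF F (u |: S) w <= deg E w + outF F S w + (w == h).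
    move=> w wS; have := cnt_add F E h uS wS; lia.
  apply: (IH (u |: S) (addE E u h)).
  + exact: card' u uS.
  + exact: treeOn_add tS uS hS.
  + move=> a b; rewrite !inE => /predU1P [->|aS] /predU1P [->|bS] Fab.
    * by rewrite Fi in Fab.
    * by rewrite Fu in Fab.
    * by rewrite Fs Fu in Fab.
    * by rewrite /= (I1 a b aS bS Fab).
  + move=> w; rewrite !inE => /predU1P [->|wS].
    * exact: leq_trans cntu M2.
    * apply: leq_trans (cntle w wS) _.
      case: (w =P h) => [->|_]; last by rewrite addn0 (I2 w wS).
      by apply: leq_trans M2; rewrite addn1 ltnS.
  + case: (v =P u) => [evu|nvu].
    * exists u; left; split; first by rewrite setU11.
      have d0 := vu evu; rewrite evu in d0.
      have := deg_new Ein uS hS; have := outF_le F (u |: S) u; rewrite /deg in d0 *.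
      rewrite /deg; lia.
    * exists v; right; split => //.
        rewrite !inE negb_or; apply/andP; split; first by apply/eqP.
        by apply/negP => vS; move/negP: uS; apply; apply: (clS v) => //; rewrite (sym_connect_sym Fs).
      by exists u => //; rewrite setU11.
  + move=> a b; rewrite !inE => /predU1P [->|aS] /predU1P [->|bS] cab.
    * exact: connect0.
    * by move/negP: uS; case; apply: (clS b) => //; rewrite (sym_connect_sym Fs).
    * by move/negP: uS; case; apply: (clS a).
    * exact: sub_restr (I4 _ _ aS bS cab).
Qed.
Definition Frel (V T : finType) (eG : rel V) (P : T -> {set V}) : rel T :=
  [rel a b | (a != b) && [exists v, exists w, [&& v \in P a, w \in P b & eG v w]]].
Arguments Frel V T eG P _ _ /.

Lemma card_bigcup_sum (V T : finType) (A : {pred T}) (B : T -> {set V}) :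
  #|\bigcup_(v in A) B v| <= \sum_(v in A) #|B v|.
Proof.
elim/big_rec2: _ => [|i X n _ IH]; first by rewrite cards0.
by apply: leq_trans (cardU_le _ _) _; rewrite leq_add2l.
Qed.

Lemma degF_bound (V T : finType) (eG : rel V) (P : T -> {set V}) a :
  (forall x y, x != y -> [disjoint P x & P y]) ->
  deg (Frel eG P) a <= #|P a| * max_deg eG.
Proof.
move=> Pdisj.
pose pt w := odflt a [pick x | w \in P x].
have sub : nbhd (Frel eG P) a \subset \bigcup_(v in P a) (pt @: nbhd eG v).
  apply/subsetP => b; rewrite inE => /andP [nab /existsP [v /existsP [w /and3P [va wb evw]]]].
  apply/bigcupP; exists v => //; apply/imsetP; exists w; first by rewrite inE.
  rewrite /pt; case: pickP => [x wx|/(_ b)]; last by rewrite wb.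
  apply/eqP; apply/negPn/negP => nbx.
  by rewrite (disjointFr (Pdisj _ _ nbx) wb) in wx.
apply: leq_trans (subset_leq_card sub) _.
apply: leq_trans (card_bigcup_sum _ _) _.
rewrite -sum_nat_const; apply: leq_sum => v _.
apply: leq_trans (leq_imset_card _ _) _.
exact: (leq_bigmax (F := deg eG) v).
Qed.

Theorem mainTheorem7 (k : nat) (V : finType) (eG : rel V) :
  simple_graph eG ->
  (exists (T0 : finType) (e0 : rel T0) (P0 : T0 -> {set V}),
      is_tree e0 /\ T_partition eG e0 P0 /\ width P0 <= k) ->
  exists (T : finType) (eT : rel T) (P : T -> {set V}),
    [/\ is_tree eT, T_partition eG eT P, width P <= k &
        max_deg eT <= maxn (k * max_deg eG) 2].
Proof.
move=> [Gs Gi] [T0 [e0 [P0 [[T0n [[e0s e0i] [e0c e0a]]] [[Pdisj [Pcov Pedge]] wk]]]]].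
set F := Frel eG P0.
set M := maxn (k * max_deg eG) 2.
have Fsub : forall a b, F a b -> e0 a b.
  move=> a b; rewrite /F /= => /andP [nab /existsP [v /existsP [w /and3P [va wb evw]]]].
  by case: (Pedge v w a b evw va wb) => // eab; rewrite eab eqxx in nab.
have Fs : symmetric F.
  move=> a b; rewrite /F /= eq_sym; congr (_ && _).
  apply/existsP/existsP => -[v /existsP [w /and3P [va wb evw]]];
    by exists w; apply/existsP; exists v; rewrite va wb Gs.
have Fi : irreflexive F by move=> a; rewrite /F /= eqxx.
have Fa : acyclic F.
  move=> s uq sz; apply/negP => cy; move: (e0a s uq sz); by rewrite (sub_cycle Fsub cy).
have M2 : 2 <= M by rewrite /M leq_maxr.
have FM : forall y, deg F y <= M.
  move=> y; apply: leq_trans (@degF_bound V T0 eG P0 y Pdisj) _.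
  apply: leq_trans (leq_maxl _ 2); apply: leq_mul => //.
  exact: leq_trans (leq_bigmax (F := fun x => #|P0 x|) y) wk.
have [t0 _] : exists t0, t0 \in [set: T0] by apply/set0Pn; rewrite -card_gt0 cardsT.
have [t [_ dt _]] := leafL Fs Fi Fa t0.
have E0deg : forall y, deg [rel _ _ : T0 | false] y = 0.
  by move=> y; apply/eqP; rewrite cards_eq0; apply/eqP/setP => w; rewrite !inE.
have tS0 : treeOn [set t] [rel _ _ : T0 | false].
  split => //.
  + by move=> u v; rewrite !inE => /eqP -> /eqP ->; exact: connect0.
  + by move=> s _; case: s => [|a [|b r]].
have I10 : forall u v, u \in [set t] -> v \in [set t] -> F u v -> [rel _ _ : T0 | false] u v.
  by move=> u v; rewrite !inE => /eqP -> /eqP ->; rewrite Fi.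
have I20 : forall y, y \in [set t] -> deg [rel _ _ : T0 | false] y + outF F [set t] y <= M.
  move=> y; rewrite inE => /eqP ->; rewrite E0deg add0n.
  apply: leq_trans (outF_le _ _ _) _; exact: leq_trans dt (ltnW M2).
have I30 : exists h, (h \in [set t] /\ deg [rel _ _ : T0 | false] h + outF F [set t] h <= 1) \/
             [/\ h \notin [set t], deg F h <= 1 & exists2 s, s \in [set t] & connect F s h].
  exists t; left; split; first by rewrite set11.
  by rewrite E0deg add0n; apply: leq_trans (outF_le _ _ _) dt.
have I40 : forall u v, u \in [set t] -> v \in [set t] -> connect F u v -> connect (restr [set t] F) u v.
  by move=> u v; rewrite !inE => /eqP -> /eqP -> _; exact: connect0.
have [E [[_ Es Ei Ec Ea] FE EM]] :=
  @grow T0 F M Fs Fi Fa M2 FM _ [set t] [rel _ _ | false] erefl tS0 I10 I20 I30 I40.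
exists T0, E, P0; split => //.
- split => //; split => //; split => // u v; exact: Ec.
- split => //; split => // v w x y evw vx wy.
  case: (x =P y) => [|nxy]; [by left|right]; apply: FE.
  rewrite /F /=; apply/andP; split; first by apply/eqP.
  by apply/existsP; exists v; apply/existsP; exists w; rewrite vx wy evw.
- by apply/bigmax_leqP => y _; exact: EM.
Qed.
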